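(* For every integer $n\ge 1$ there exists a graph (multigraph) $\mathcal{G}=(\mathcal{V},\mathcal{E})$ with $V=n+1$ vertices and vertices $s,t\in\mathcal{V}$ such that for any algorithm $\mathcal{A}$ that is $(\epsilon,\delta)$-differentially private on $\mathcal{G}$ and that on each input weight function outputs a path from $s$ to $t$, there exist edge weights $w:\mathcal{E}\to\{0,1\}$ for which the expected approximation error of the path $\mathcal{A}(w)$ is at least $\alpha=(V-1)\cdot\frac{1-(1+e^{\epsilon})\delta}{1+e^{2\epsilon}}$. In particular, for sufficiently small $\epsilon$ and $\delta$, $\alpha\ge 0.49(V-1)$.
   Context: Private edge weight model: for a graph $\mathcal{G}=(\mathcal{V},\mathcal{E})$ (parallel edges allowed), a weight function is $w:\mathcal{E}\to\mathbb{R}^+$ (nonnegative reals). Two weight functions $w,w'$ are neighboring if $\sum_{e\in\mathcal{E}}|w(e)-w'(e)|\le 1$. A randomized algorithm $\mathcal{A}$ taking weight functions on $\mathcal{E}$ as input is $(\epsilon,\delta)$-differentially private on $\mathcal{G}$ if for all neighboring $w,w'$ and all sets $S$ of outputs, $\Pr[\mathcal{A}(w)\in S]\le e^{\epsilon}\Pr[\mathcal{A}(w')\in S]+\delta$. The weight $w(P)$ of a path is the sum of the weights of its edges and $d_w(x,y)$ is the minimum weight of a path from $x$ to $y$. The approximation error of a path $P$ from $s$ to $t$ is $w(P)-d_w(s,t)$. *)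

(* Defs.v *)
From HB Require Import structures.
From mathcomp Require Import all_boot all_order all_algebra.
From mathcomp Require Import all_classical all_reals all_analysis.
Set Implicit Arguments. Unset Strict Implicit. Unset Printing Implicit Defensive.
Import Order.TTheory GRing.Theory Num.Theory.
Local Open Scope classical_set_scope.
Local Open Scope ring_scope.

(* An undirected multigraph on vertex set 'I_V with m edges is given by
   ends : 'I_m -> 'I_V * 'I_V (parallel edges and loops allowed). *)
Fixpoint is_walk (V m : nat) (ends : 'I_m -> 'I_V * 'I_V) (x y : 'I_V)
    (p : seq 'I_m) : bool :=
  match p with
  | [::] => x == y
  | e :: p' => ((ends e).1 == x) && is_walk ends (ends e).2 y p'
             || ((ends e).2 == x) && is_walk ends (ends e).1 y p'
  end.

Definition st_paths (V m : nat) (ends : 'I_m -> 'I_V * 'I_V) (s t : 'I_V)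
  : set (seq 'I_m) := [set p | is_walk ends s t p].

Definition path_weight (R : realType) (m : nat) (w : 'I_m -> R) (p : seq 'I_m) : R :=
  \sum_(e <- p) w e.

Definition dist (R : realType) (V m : nat) (ends : 'I_m -> 'I_V * 'I_V)
  (w : 'I_m -> R) (s t : 'I_V) : R :=
  inf [set path_weight w p | p in st_paths ends s t].

Definition approx_error (R : realType) (V m : nat) (ends : 'I_m -> 'I_V * 'I_V)
  (w : 'I_m -> R) (s t : 'I_V) (p : seq 'I_m) : R :=
  path_weight w p - dist ends w s t.

Definition nonneg_weight (R : realType) (m : nat) (w : 'I_m -> R) : Prop :=
  forall e, 0 <= w e.

Definition neighboring (R : realType) (m : nat) (w w' : 'I_m -> R) : Prop :=
  \sum_(e < m) `|w e - w' e| <= 1.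

(* A randomized algorithm with outputs in the countable set seq 'I_m is
   given by its output distribution on each input: A w : seq 'I_m -> R
   (probability mass function). *)
Definition prob (R : realType) (m : nat) (mu : seq 'I_m -> R) (S : set (seq 'I_m))
  : \bar R := \esum_(p in S) (mu p)%:E.

Definition is_distribution (R : realType) (m : nat) (mu : seq 'I_m -> R) : Prop :=
  (forall p, 0 <= mu p) /\ prob mu setT = 1%E.

Definition outputs_st_path (R : realType) (V m : nat) (ends : 'I_m -> 'I_V * 'I_V)
  (s t : 'I_V) (A : ('I_m -> R) -> seq 'I_m -> R) : Prop :=
  forall w, nonneg_weight w ->
    is_distribution (A w) /\ (forall p, ~~ is_walk ends s t p -> A w p = 0).

Definition diff_private (R : realType) (m : nat) (eps delta : R)
  (A : ('I_m -> R) -> seq 'I_m -> R) : Prop :=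
  forall w w', nonneg_weight w -> nonneg_weight w' -> neighboring w w' ->
    forall S : set (seq 'I_m),
      (prob (A w) S <= (expR eps)%:E * prob (A w') S + delta%:E)%E.

Definition expected_error (R : realType) (V m : nat) (ends : 'I_m -> 'I_V * 'I_V)
  (s t : 'I_V) (mu : seq 'I_m -> R) (w : 'I_m -> R) : \bar R :=
  \esum_(p in st_paths ends s t) ((mu p)%:E * (approx_error ends w s t p)%:E)%E.

(* Main.v *)
Require Import Defs.
From HB Require Import structures.
From mathcomp Require Import all_boot all_order all_algebra.
From mathcomp Require Import all_classical all_reals all_analysis.
From mathcomp Require Import zify ring lra.
Set Implicit Arguments. Unset Strict Implicit. Unset Printing Implicit Defensive.
Import Order.TTheory GRing.Theory Num.Theory.
Local Open Scope classical_set_scope.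
Local Open Scope ring_scope.

Section Graph.
Context {k : nat}.
Notation M := (k.*2).+2.

Definition gad (e : 'I_M) : 'I_k.+1 := inord (e %/ 2).
Definition gends (e : 'I_M) : 'I_k.+2 * 'I_k.+2 := (inord (e %/ 2), inord (e %/ 2).+1).

Lemma div2_lt (e : 'I_M) : (e %/ 2 < k.+1)%N.
Proof. have := ltn_ord e. lia. Qed.

Lemma gadE e : val (gad e) = (e %/ 2)%N.
Proof. by rewrite /gad /= inordK // div2_lt. Qed.

Lemma ends1 e : val (gends e).1 = (e %/ 2)%N.
Proof. by rewrite /= inordK // ltnS ltnW // div2_lt. Qed.
Lemma ends2 e : val (gends e).2 = (e %/ 2).+1%N.
Proof. by rewrite /= inordK // ltnS div2_lt. Qed.

Lemma crossing p : forall (x y : 'I_k.+2), is_walk gends x y p ->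
  forall i : nat, (x <= i < y)%N -> has (fun e : 'I_M => e %/ 2 == i)%N p.
Proof.
elim: p => [|e p IH] x y /=.
  by move=> /eqP -> i; lia.
case/orP => /andP [/eqP h1 hw] i hi.
- have hx : val x = (e %/ 2)%N by rewrite -h1 ends1.
  have hy := ends2 e.
  case: (eqVneq (e %/ 2)%N i) => [//|ne] /=.
  apply: (IH _ _ hw).
  rewrite hy; move: hi ne; rewrite hx; lia.
- have hx : val x = (e %/ 2).+1%N by rewrite -h1 ends2.
  have hy := ends1 e.
  apply/orP; right; apply: (IH _ _ hw).
  rewrite hy; move: hi; rewrite hx; lia.
Qed.

Lemma walk_exists (sg : 'I_k.+1 -> bool) :
  exists p, is_walk gends ord0 ord_max p /\ all (fun e : 'I_M => odd e == sg (gad e)) p.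
Proof.
suff H : forall d, (d <= k.+1)%N -> exists p,
    is_walk gends (inord (k.+1 - d)) ord_max p /\ all (fun e : 'I_M => odd e == sg (gad e)) p.
  have [p [h1 h2]] := H k.+1 (leqnn _).
  exists p; split => //.
  have -> : (ord0 : 'I_k.+2) = inord (k.+1 - k.+1) by apply: val_inj; rewrite /= inordK subnn.
  exact: h1.
elim=> [|d IH] hd.
  exists [::]; split => //=; apply/eqP/val_inj; rewrite /= inordK ?subn0 //.
have [p [h1 h2]] := IH (ltnW hd).
set j := (k.+1 - d.+1)%N.
have hj : (j < k.+1)%N by rewrite /j; lia.
have hb : (j.*2 + sg (inord j) < M)%N by case: (sg _); lia.
pose e : 'I_M := Ordinal hb.
have he : (e %/ 2)%N = j.
  rewrite /=; case: (sg _) => /=; lia.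
have hge : gad e = inord j by apply: val_inj; rewrite gadE he /= inordK.
have h1e : (gends e).1 = inord (k.+1 - d.+1).
  by apply: val_inj; rewrite ends1 he /= inordK // ltnS ltnW.
have h2e : (gends e).2 = inord (k.+1 - d).
  by apply: val_inj; rewrite ends2 he /= inordK; rewrite /j; lia.
exists (e :: p); split.
- apply/orP; left; apply/andP; split; [by rewrite h1e | by rewrite h2e].
- rewrite /= h2 andbT hge.
  have -> : odd e = sg (inord j) by rewrite /= oddD odd_double /=; case: (sg _).
  by rewrite eqxx.
Qed.

Section Weights.
Variable R : realType.

Definition wt (sg : 'I_k.+1 -> bool) (e : 'I_M) : R := (odd e == ~~ sg (gad e))%:R.

Definition badp (sg : 'I_k.+1 -> bool) (i : 'I_k.+1) (e : 'I_M) : bool :=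
  (gad e == i) && (odd e == ~~ sg i).

Lemma wt_ge0 sg e : 0 <= wt sg e.
Proof. exact: ler0n. Qed.

Lemma weight_bound sg p :
  \sum_(i < k.+1) (has (badp sg i) p)%:R <= path_weight (wt sg) p.
Proof.
rewrite /path_weight; elim: p => [|e p IH].
  by rewrite big_nil big1.
rewrite big_cons.
have he : \sum_(i < k.+1) (badp sg i e)%:R = wt sg e.
  rewrite (bigD1 (gad e)) //= big1 ?addr0.
    by rewrite /badp eqxx.
  by move=> i /negPf hi; rewrite /badp eq_sym hi.
apply: le_trans (lerD (le_refl (wt sg e)) IH).
rewrite -he -big_split /=; apply: ler_sum => i _.
by case: (badp sg i e); case: (has _ _) => //=; rewrite ?addr0 ?add0r ?ler0n ?lerDl ?ler0n.
Qed.

Lemma pw_ge0 sg p : 0 <= path_weight (wt sg) p.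
Proof. by rewrite /path_weight; apply: sumr_ge0 => e _; exact: wt_ge0. Qed.

Lemma dist_le0 sg : dist gends (wt sg) ord0 ord_max <= 0.
Proof.
have [p [hw ha]] := walk_exists sg.
have hp : path_weight (wt sg) p = 0.
  rewrite /path_weight big_seq big1 // => e he.
  rewrite /wt; have /eqP -> := allP ha e he.
  by case: (sg _).
rewrite /dist -hp.
have hlb : has_lbound [set path_weight (wt sg) p | p in st_paths gends ord0 ord_max].
  by exists 0 => y [q _ <-]; exact: pw_ge0.
apply: (ge_inf hlb); exists p => //.
Qed.

Lemma err_bound sg p :
  \sum_(i < k.+1) (has (badp sg i) p)%:R <= approx_error gends (wt sg) ord0 ord_max p.
Proof.
rewrite /approx_error; apply: le_trans (weight_bound sg p) _.
have := dist_le0 sg; lra.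
Qed.

End Weights.
Section Prob.
Variable R : realType.
Implicit Types (A : ('I_M -> R) -> seq 'I_M -> R).

Definition Pw A (w : 'I_M -> R) (S : set (seq 'I_M)) : R := fine (prob (A w) S).

Definition Ev (i : 'I_k.+1) (b : bool) : set (seq 'I_M) :=
  [set p | has (fun e => (gad e == i) && (odd e == b)) p].

Lemma probE A (hout : outputs_st_path gends ord0 ord_max A) w (hw : nonneg_weight w) S :
  prob (A w) S = (Pw A w S)%:E /\ 0 <= Pw A w S <= 1.
Proof.
have [[h0 h1] hz] := hout w hw.
have hge : (0 <= prob (A w) S)%E by apply: esum_ge0 => p _; rewrite lee_fin.
have hle : (prob (A w) S <= 1)%E.
  rewrite -h1 /prob (esum_mkcond S) (esum_mkcond setT); apply: le_esum => p _.
  rewrite in_setT; case: ifP => _ //; by rewrite lee_fin.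
have hf : prob (A w) S \is a fin_num.
  by rewrite ge0_fin_numE // (le_lt_trans hle) // ltry.
have E : prob (A w) S = (Pw A w S)%:E by rewrite /Pw fineK.
split => //; apply/andP; split; by rewrite -lee_fin -E.
Qed.

Lemma cover A (hout : outputs_st_path gends ord0 ord_max A) w (hw : nonneg_weight w) i :
  1 <= Pw A w (Ev i true) + Pw A w (Ev i false).
Proof.
have [[h0 h1] hz] := hout w hw.
rewrite -lee_fin EFinD -(probE hout hw _).1 -(probE hout hw _).1 -h1 /prob.
rewrite !(esum_mkcond (Ev i _)) -esumD; last 2 first.
- by move=> p _; case: ifP => _; rewrite // lee_fin.
- by move=> p _; case: ifP => _; rewrite // lee_fin.
apply: le_esum => p _.
have g0 : forall b, (0 <= if p \in Ev i b then (A w p)%:E else 0)%E.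
  by move=> b; case: ifP => _; rewrite // lee_fin.
case: (boolP (is_walk gends ord0 ord_max p)) => hp; last first.
  by rewrite [X in (X%:E <= _)%E]hz //; exact: adde_ge0 (g0 true) (g0 false).
have := crossing hp (i := val i) => /(_ (ltn_ord i)) /hasP [e he /eqP hei].
have hm : p \in Ev i (odd e).
  apply: mem_set; apply/hasP; exists e => //.
  by rewrite eqxx andbT; apply/eqP/val_inj; rewrite gadE.
case: (odd e) hm => ->.
- by rewrite leeDl.
- by rewrite leeDr.
Qed.

Lemma count1 (i : 'I_k.+1) (b : bool) :
  \sum_(e : 'I_M) ((gad e == i) && (odd e == b))%:R <= 1 :> R.
Proof.
have hlt : (i.*2 + b < M)%N by have := ltn_ord i; case: b => /=; lia.
pose e0 : 'I_M := Ordinal hlt.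
rewrite (bigD1 e0) //= big1 ?addr0; first by case: (_ && _).
move=> e hne; apply/eqP; rewrite pnatr_eq0 eqb0; apply/negP => /andP [/eqP hg /eqP ho].
move/negP: hne; apply; apply/eqP/val_inj => /=.
rewrite -(odd_double_half e) ho -divn2 -gadE hg.
by rewrite addnC.
Qed.

Lemma dp2 A (hout : outputs_st_path gends ord0 ord_max A) (eps delta : R)
  (he : 0 <= eps) (hdp : diff_private eps delta A)
  (sg tau : 'I_k.+1 -> bool) (i : 'I_k.+1)
  (hti : tau i = ~~ sg i) (htj : forall j, j != i -> tau j = sg j) S :
  Pw A (wt R sg) S <= expR (2 * eps) * Pw A (wt R tau) S + (1 + expR eps) * delta.
Proof.
pose w2 : 'I_M -> R := fun e => if gad e == i then 0 else wt R sg e.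
have hw2 : nonneg_weight w2 by move=> e; rewrite /w2; case: ifP => _ //; exact: wt_ge0.
have hws : nonneg_weight (wt R sg) by move=> e; exact: wt_ge0.
have hwt : nonneg_weight (wt R tau) by move=> e; exact: wt_ge0.
have n1 : neighboring (wt R sg) w2.
  rewrite /neighboring; apply: (le_trans _ (count1 i (~~ sg i))).
  apply: ler_sum => e _; rewrite /w2 /wt.
  case: (eqVneq (gad e) i) => [->|_] /=; last by rewrite subrr normr0.
  by rewrite subr0 ger0_norm.
have n2 : neighboring w2 (wt R tau).
  rewrite /neighboring; apply: (le_trans _ (count1 i (~~ tau i))).
  apply: ler_sum => e _; rewrite /w2 /wt.
  case: (eqVneq (gad e) i) => [->|hne] /=.
    by rewrite sub0r normrN ger0_norm.
  by rewrite htj // subrr normr0.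
have d1 := hdp _ _ hws hw2 n1 S.
have d2 := hdp _ _ hw2 hwt n2 S.
move: d1 d2; rewrite (probE hout hws S).1 (probE hout hw2 S).1 (probE hout hwt S).1.
rewrite -!EFinM -!EFinD !lee_fin => d1 d2.
have eg : 0 <= expR eps by exact: expR_ge0.
have e2 : expR (2 * eps) = expR eps * expR eps by rewrite -expRD; congr expR; ring.
rewrite e2.
have := ler_wpM2l eg d2. nra.
Qed.

Lemma memEv i b (p : seq 'I_M) :
  (p \in Ev i b) = has (fun e => (gad e == i) && (odd e == b)) p.
Proof. by apply/idP/idP => [/set_mem|h] //; exact: mem_set. Qed.

Lemma memst (p : seq 'I_M) :
  (p \in st_paths gends ord0 ord_max) = is_walk gends ord0 ord_max p.
Proof. by apply/idP/idP => [/set_mem|h] //; exact: mem_set. Qed.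

Lemma exp_bound A (hout : outputs_st_path gends ord0 ord_max A) sg :
  ((\sum_(i < k.+1) Pw A (wt R sg) (Ev i (~~ sg i)))%:E
    <= expected_error gends ord0 ord_max (A (wt R sg)) (wt R sg))%E.
Proof.
have hws : nonneg_weight (wt R sg) by move=> e; exact: wt_ge0.
have [[h0 h1] hz] := hout _ hws.
rewrite -sumEFin.
under eq_bigr => i _ do rewrite -(probE hout hws _).1 /prob esum_mkcond.
rewrite -esum_sum; last by move=> p j _ _; case: ifP => _; rewrite // lee_fin.
rewrite /expected_error (esum_mkcond (st_paths _ _ _)); apply: le_esum => p _.
rewrite memst; case: (boolP (is_walk gends ord0 ord_max p)) => hp; last first.
  rewrite big1 // => i _; rewrite hz //; by case: ifP.
have -> : (\sum_(i < k.+1) (if p \in Ev i (~~ sg i) then (A (wt R sg) p)%:E else 0%E))%E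
   = ((A (wt R sg) p) * \sum_(i < k.+1) (has (badp sg i) p)%:R)%:E.
  rewrite mulr_sumr -sumEFin; apply: eq_bigr => i _.
  by rewrite memEv /badp; case: has; rewrite ?mulr1 ?mulr0.
rewrite -EFinM lee_fin; apply: ler_wpM2l => //.
exact: err_bound.
Qed.

End Prob.
End Graph.

Definition flip {k} (sg : {ffun 'I_k.+1 -> bool}) (i : 'I_k.+1) : {ffun 'I_k.+1 -> bool} :=
  [ffun j => if j == i then ~~ sg j else sg j].

Lemma flipK k (i : 'I_k.+1) : involutive (flip^~ i).
Proof.
move=> sg; apply/ffunP => j; rewrite !ffunE.
by case: (eqVneq j i) => [->|_]; rewrite ?eqxx ?negbK.
Qed.

Lemma small_bound (R : realType) (n : nat) :
  exists eps0 delta0 : R, 0 < eps0 /\ 0 < delta0 /\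
     forall eps delta : R, 0 <= eps -> eps < eps0 -> 0 <= delta -> delta < delta0 ->
       (49%:R / 100%:R) * n%:R <=
         n%:R * ((1 - (1 + expR eps) * delta) / (1 + expR (2 * eps))).
Proof.
exists (1/200), (1/1000); split; first lra; split; first lra.
move=> eps delta he he0 hd hd0.
set Y := expR (2 * eps); set X := expR eps.
have hY0 : 0 < Y by exact: expR_gt0.
have hXY : X <= Y by rewrite /X /Y ler_expR; lra.
have hY1 : Y * (1 - 2 * eps) <= 1.
  have h := expR_ge1Dx (- (2 * eps)).
  rewrite expRN -/Y in h.
  have : (1 + - (2 * eps)) * Y <= Y^-1 * Y by rewrite ler_pM2r.
  by rewrite mulVf ?gt_eqF // mulrC; lra.
have hYb : Y <= 100/99 by nra.
have hn : 0 <= n%:R :> R by exact: ler0n.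
rewrite mulrC; apply: ler_wpM2l => //.
rewrite ler_pdivlMr; last lra.
nra.
Qed.

Theorem theorem5p1 (R : realType) :
  forall n : nat, (1 <= n)%N ->
  (exists (m : nat) (ends : 'I_m -> 'I_n.+1 * 'I_n.+1) (s t : 'I_n.+1),
     st_paths ends s t !=set0 /\
     forall (eps delta : R), 0 <= eps -> 0 <= delta ->
     forall A : ('I_m -> R) -> seq 'I_m -> R,
       diff_private eps delta A -> outputs_st_path ends s t A ->
       exists w : 'I_m -> R, (forall e, w e = 0 \/ w e = 1) /\
         (((n.+1 - 1)%:R * ((1 - (1 + expR eps) * delta) / (1 + expR (2 * eps))))%:E
            <= expected_error ends s t (A w) w)%E)
  /\
  (exists eps0 delta0 : R, 0 < eps0 /\ 0 < delta0 /\
     forall eps delta : R, 0 <= eps -> eps < eps0 -> 0 <= delta -> delta < delta0 ->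
       (49%:R / 100%:R) * (n.+1 - 1)%:R <=
         (n.+1 - 1)%:R * ((1 - (1 + expR eps) * delta) / (1 + expR (2 * eps)))).
Proof.
case=> [//|k] _; split; last exact: small_bound.
exists (k.*2).+2, (@gends k), ord0, ord_max; split.
  have [p [hp _]] := walk_exists (fun _ : 'I_k.+1 => true).
  by exists p.
move=> eps delta he hd A hdp hout.
pose f (sg : {ffun 'I_k.+1 -> bool}) (i : 'I_k.+1) : R :=
  Pw A (wt R sg) (Ev i (~~ sg i)).
set c := (1 + expR eps) * delta.
set e2 := expR (2 * eps).
set al := (1 - c) / (1 + e2).
have he2 : 0 < 1 + e2 by have := expR_gt0 (2 * eps); rewrite -/e2; lra.
have L : forall sg i, 1 - c <= f sg i + e2 * f (flip sg i) i.
  move=> sg i.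
  have hws : nonneg_weight (wt R sg) by move=> e; exact: wt_ge0.
  have hc := cover hout hws i.
  have hdp2 := dp2 hout he hdp (sg := sg) (tau := flip sg i) (i := i)
     (ltac:(by rewrite ffunE eqxx))
     (ltac:(by move=> j hj; rewrite ffunE (negPf hj))) (Ev i (sg i)).
  have ht : ~~ (flip sg i) i = sg i by rewrite ffunE eqxx negbK.
  rewrite /f ht -/e2 -/c.
  move: hc hdp2; rewrite -/e2 -/c.
  by case: (sg i) => /=; lra.
have P2 : forall sg i, 2 * al <= f sg i + f (flip sg i) i.
  move=> sg i; have h1 := L sg i; have h2 := L (flip sg i) i.
  rewrite flipK in h2.
  rewrite /al mulrA ler_pdivrMr //; nra.
have Si : forall i, \sum_(sg : {ffun 'I_k.+1 -> bool}) al <= \sum_sg f sg i.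
  move=> i.
  have hs : \sum_(sg : {ffun 'I_k.+1 -> bool}) (2 * al)
      <= \sum_sg f sg i + \sum_sg f (flip sg i) i.
    by rewrite -big_split /=; apply: ler_sum => sg _; exact: P2.
  have hre : \sum_(sg : {ffun 'I_k.+1 -> bool}) f sg i
      = \sum_(sg : {ffun 'I_k.+1 -> bool}) f (flip sg i) i.
    exact: (reindex_inj (inv_inj (@flipK k i))).
  rewrite -hre -mulr_sumr in hs.
  lra.
have Tot : \sum_(sg : {ffun 'I_k.+1 -> bool}) \sum_(i < k.+1) al
    <= \sum_sg \sum_(i < k.+1) f sg i.
  rewrite exchange_big [X in _ <= X]exchange_big /=.
  by apply: ler_sum => i _; exact: Si.
have [sg Hsg] : exists sg, \sum_(i < k.+1) al <= \sum_(i < k.+1) f sg i.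
  case: (boolP [exists sg, \sum_(i < k.+1) al <= \sum_(i < k.+1) f sg i]).
    by move/existsP.
  move/existsPn => H; exfalso.
  have : \sum_(sg : {ffun 'I_k.+1 -> bool}) \sum_(i < k.+1) f sg i
       < \sum_(sg : {ffun 'I_k.+1 -> bool}) \sum_(i < k.+1) al.
    apply: ltr_sum.
      by apply/hasP; exists [ffun=> true]; rewrite ?mem_index_enum.
    by move=> s _; rewrite ltNge; exact: H.
  by rewrite ltNge Tot.
exists (wt R sg); split.
  by move=> e; rewrite /wt; case: (_ == _); [right|left].
apply: le_trans (exp_bound hout sg).
rewrite lee_fin; apply: le_trans Hsg.
by rewrite sumr_const card_ord subn1 /= mulr_natl.
Qed.
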